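(* Let $0<b<1$, $\alpha\in(0,1]$ and $a=b^{\alpha}$. Every $I_0$-valued (discrete) semi-stable$(a,b)$ law is discrete semi-selfdecomposable$(b)$.
   Context: $I_0=\{0,1,2,\dots\}$. An $I_0$-valued random variable with probability generating function (PGF) $P(s)$ is discrete semi-stable$(a,b)$ if $P(s)\neq 0$ and $\{P(s)\}^a=P(1-b+bs)$ for all $0\le s\le 1$, where $0<b<1$ and $b=a^{1/\alpha}$ for some $\alpha\in(0,1]$. An $I_0$-valued random variable with PGF $P(s)$ is discrete semi-selfdecomposable$(b)$ ($0<b<1$) if there exists an infinitely divisible PGF $P_0(s)$ such that $P(s)=P(1-b+bs)\,P_0(s)$ for all $0\le s\le 1$. *)

(* Defs.v *)
From Stdlib Require Import Reals.
From Coquelicot Require Import Coquelicot.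
Open Scope R_scope.

(* A probability law on I_0 = {0,1,2,...}, given by its probability mass
   function p : nat -> R (p n = P(X = n)). *)
Definition pmf_I0 (p : nat -> R) : Prop :=
  (forall n, 0 <= p n) /\ is_series p 1.

Definition pgf (p : nat -> R) (s : R) : R :=
  Series (fun n => p n * s ^ n).

Definition inf_div_pmf (p0 : nat -> R) : Prop :=
  pmf_I0 p0 /\
  forall n : nat, (1 <= n)%nat ->
    exists q : nat -> R, pmf_I0 q /\
      forall s, 0 <= s <= 1 -> (pgf q s) ^ n = pgf p0 s.

Definition disc_semi_stable (a b : R) (p : nat -> R) : Prop :=
  pmf_I0 p /\
  forall s, 0 <= s <= 1 ->
    pgf p s <> 0 /\ Rpower (pgf p s) a = pgf p (1 - b + b * s).

Definition disc_semi_selfdecomp (b : R) (p : nat -> R) : Prop :=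
  pmf_I0 p /\
  exists p0 : nat -> R, inf_div_pmf p0 /\
    forall s, 0 <= s <= 1 -> pgf p s = pgf p (1 - b + b * s) * pgf p0 s.

(* Main.v *)
Require Import Defs.
From Stdlib Require Import Reals.
From Coquelicot Require Import Coquelicot.
Open Scope R_scope.
From Stdlib Require Import Lia Lra.

Fixpoint tab (F : nat -> (nat -> R) -> R) (n : nat) : nat -> R :=
  match n with
  | O => fun _ => F O (fun _ => 0)
  | S m => fun i => if Nat.leb i m then tab F m i else F (S m) (tab F m)
  end.
Definition sr F k := tab F k k.
Definition local (F : nat -> (nat -> R) -> R) :=
  forall k f g, (forall i, (i < k)%nat -> f i = g i) -> F k f = F k g.

Lemma tab_stable F : forall n i, (i <= n)%nat -> tab F n i = tab F i i.
Proof.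
  induction n as [|n IH]; intros i Hi.
  - assert (i = 0%nat) by lia. subst. reflexivity.
  - destruct (Nat.eq_dec i (S n)) as [->|Hne]; [reflexivity|].
    simpl. replace (Nat.leb i n) with true by (symmetry; apply Nat.leb_le; lia).
    apply IH; lia.
Qed.

Lemma sr_eq F : local F -> forall k, sr F k = F k (sr F).
Proof.
  intros HF [|k]; unfold sr.
  - simpl. apply HF. intros; lia.
  - change (tab F (S k) (S k)) with (if Nat.leb (S k) k then tab F k (S k) else F (S k) (tab F k)).
    replace (Nat.leb (S k) k) with false by (symmetry; apply Nat.leb_gt; lia). apply HF. intros i Hi. apply tab_stable. lia.
Qed.

Lemma sr_unique F u : local F -> (forall k, u k = F k u) -> forall k, u k = sr F k.
Proof.
  intros HF Hu k. induction k as [k IH] using (well_founded_induction Wf_nat.lt_wf).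
  rewrite Hu, sr_eq by auto. apply HF. intros; apply IH; auto.
Qed.

Lemma PS_mult_ext_le a b a' b' n :
  (forall i, (i <= n)%nat -> a i = a' i) -> (forall i, (i <= n)%nat -> b i = b' i) ->
  PS_mult a b n = PS_mult a' b' n.
Proof.
  intros Ha Hb. unfold PS_mult. apply sum_eq. intros i Hi.
  rewrite Ha, Hb by lia. reflexivity.
Qed.

Lemma PS_mult_comm a b n : PS_mult a b n = PS_mult b a n.
Proof.
  unfold PS_mult. rewrite <- sum_f_R0_skip. apply sum_eq. intros i Hi.
  replace (n - (n - i))%nat with i by lia. ring.
Qed.

Lemma sum_triangle (f : nat -> nat -> R) n :
  sum_f_R0 (fun k => sum_f_R0 (fun j => f j k) k) n =
  sum_f_R0 (fun j => sum_f_R0 (fun l => f j (j + l)%nat) (n - j)) n.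
Proof.
  induction n as [|n IH].
  - simpl. reflexivity.
  - rewrite tech5, IH.
    rewrite (tech5 (fun j => sum_f_R0 (fun l => f j (j + l)%nat) (S n - j)) n).
    rewrite (sum_eq (fun j => sum_f_R0 (fun l => f j (j + l)%nat) (S n - j))
                    (fun j => sum_f_R0 (fun l => f j (j + l)%nat) (n - j) + f j (S n))).
    + rewrite plus_sum, Nat.sub_diag, tech5. simpl. rewrite Nat.add_0_r. ring.
    + intros i Hi. replace (S n - i)%nat with (S (n - i)) by lia. rewrite tech5.
      replace (i + S (n - i))%nat with (S n) by lia. reflexivity.
Qed.

Lemma PS_mult_assoc a b c n :
  PS_mult (PS_mult a b) c n = PS_mult a (PS_mult b c) n.
Proof.
  unfold PS_mult.
  rewrite (sum_eq _ (fun k => sum_f_R0 (fun j => a j * b (k - j)%nat * c (n - k)%nat) k)).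
  2:{ intros i Hi. rewrite Rmult_comm, scal_sum. apply sum_eq; intros; ring. }
  rewrite (sum_triangle (fun j k => a j * b (k - j)%nat * c (n - k)%nat)).
  apply sum_eq. intros j Hj. rewrite scal_sum. apply sum_eq. intros l Hl.
  replace (j + l - j)%nat with l by lia. replace (n - (j + l))%nat with (n - j - l)%nat by lia.
  ring.
Qed.

Lemma PS_mult_scal_l c a b n : PS_mult (fun k => c * a k) b n = c * PS_mult a b n.
Proof. unfold PS_mult. rewrite scal_sum. apply sum_eq; intros; ring. Qed.

Lemma PS_mult_scal_r c a b n : PS_mult a (fun k => c * b k) n = c * PS_mult a b n.
Proof. unfold PS_mult. rewrite scal_sum. apply sum_eq; intros; ring. Qed.

Lemma PS_mult_plus_l a a' b n : PS_mult (fun k => a k + a' k) b n = PS_mult a b n + PS_mult a' b n.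
Proof. unfold PS_mult. rewrite <- plus_sum. apply sum_eq; intros; ring. Qed.

Lemma PS_mult_S_last a b n : PS_mult a b (S n) =
  sum_f_R0 (fun j => a j * b (S n - j)%nat) n + a (S n) * b 0%nat.
Proof. unfold PS_mult. rewrite tech5, Nat.sub_diag. reflexivity. Qed.

Lemma PS_derive_mult u v k :
  PS_derive (PS_mult u v) k = PS_mult (PS_derive u) v k + PS_mult u (PS_derive v) k.
Proof.
  unfold PS_derive.
  assert (E : INR (S k) * PS_mult u v (S k) =
    sum_f_R0 (fun j => INR j * u j * v (S k - j)%nat) (S k) +
    sum_f_R0 (fun j => INR (S k - j) * u j * v (S k - j)%nat) (S k)).
  { unfold PS_mult. rewrite <- plus_sum, scal_sum. apply sum_eq. intros i Hi.
    rewrite minus_INR by lia. ring. }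
  rewrite E. f_equal.
  - rewrite decomp_sum by lia. simpl pred. unfold PS_mult.
    rewrite Rmult_0_l, Rmult_0_l, Rplus_0_l. apply sum_eq. intros i Hi. simpl. ring.
  - rewrite tech5, Nat.sub_diag. simpl INR at 2. rewrite Rmult_0_l, Rmult_0_l, Rplus_0_r.
    unfold PS_mult. apply sum_eq. intros i Hi.
    replace (S k - i)%nat with (S (k - i)) by lia. ring.
Qed.

Definition rrF (p : nat -> R) : nat -> (nat -> R) -> R := fun k f =>
  match k with
  | O => PS_derive p O / p O
  | S m => (PS_derive p (S m) - sum_f_R0 (fun j => f j * p (S m - j)%nat) m) / p O
  end.
Definition rr p := sr (rrF p).

Definition ddF (p : nat -> R) (t : R) : nat -> (nat -> R) -> R := fun k f =>
  match k with
  | O => 1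
  | S m => t / INR (S m) * PS_mult (rr p) f m
  end.
Definition dd p t := sr (ddF p t).
Definition cc p t k := Rpower (p O) t * dd p t k.

Lemma rrF_local p : local (rrF p).
Proof.
  intros [|m] f g H; simpl; auto. f_equal. f_equal. apply sum_eq. intros i Hi.
  rewrite H by lia. reflexivity.
Qed.

Lemma ddF_local p t : local (ddF p t).
Proof.
  intros [|m] f g H; simpl; auto. f_equal. apply PS_mult_ext_le; auto.
  intros; apply H; lia.
Qed.

Lemma rr_0 p : rr p O = PS_derive p O / p O.
Proof. unfold rr. rewrite sr_eq by apply rrF_local. reflexivity. Qed.

Lemma rr_S p m : rr p (S m) =
  (PS_derive p (S m) - sum_f_R0 (fun j => rr p j * p (S m - j)%nat) m) / p O.
Proof. unfold rr at 1. rewrite sr_eq by apply rrF_local. reflexivity. Qed.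

Lemma rr_spec p k : p O <> 0 -> PS_mult (rr p) p k = PS_derive p k.
Proof.
  intros H0. destruct k as [|m].
  - unfold PS_mult. simpl. rewrite rr_0. field; auto.
  - rewrite PS_mult_S_last, rr_S.
    set (X := sum_f_R0 _ m). field; auto.
Qed.

Lemma dd_0 p t : dd p t O = 1.
Proof. unfold dd. rewrite sr_eq by apply ddF_local. reflexivity. Qed.

Lemma dd_S p t m : dd p t (S m) = t / INR (S m) * PS_mult (rr p) (dd p t) m.
Proof. unfold dd at 1. rewrite sr_eq by apply ddF_local. reflexivity. Qed.

Lemma dd_spec p t m : PS_derive (dd p t) m = t * PS_mult (rr p) (dd p t) m.
Proof.
  unfold PS_derive. rewrite dd_S. field. apply not_0_INR. lia.
Qed.

Lemma dd_unique p t u : u O = 1 -> (forall m, PS_derive u m = t * PS_mult (rr p) u m) ->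
  forall k, u k = dd p t k.
Proof.
  intros H0 HD. apply sr_unique. apply ddF_local.
  intros [|m]; unfold ddF; cbv beta iota; auto. specialize (HD m). unfold PS_derive in HD.
  assert (INR (S m) <> 0) by (apply not_0_INR; lia).
  apply (Rmult_eq_reg_l (INR (S m))); auto. rewrite HD. field; auto.
Qed.

Lemma dd_add p t t' k : dd p (t + t') k = PS_mult (dd p t) (dd p t') k.
Proof.
  symmetry. apply (dd_unique p (t + t') (fun k => PS_mult (dd p t) (dd p t') k)).
  - unfold PS_mult; simpl. rewrite !dd_0. ring.
  - intros m. rewrite PS_derive_mult.
    rewrite (PS_mult_ext_le _ _ (fun k => t * PS_mult (rr p) (dd p t) k) (dd p t') m)
      by (intros; try apply dd_spec; reflexivity).
    rewrite (PS_mult_ext_le (dd p t) _ (dd p t) (fun k => t' * PS_mult (rr p) (dd p t') k) m)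
      by (intros; try apply dd_spec; reflexivity).
    rewrite PS_mult_scal_l, PS_mult_scal_r.
    rewrite (PS_mult_assoc (rr p) (dd p t) (dd p t')).
    rewrite <- (PS_mult_assoc (dd p t) (rr p) (dd p t')).
    rewrite (PS_mult_ext_le (PS_mult (dd p t) (rr p)) (dd p t') (PS_mult (rr p) (dd p t)) (dd p t') m)
      by (intros; try apply PS_mult_comm; reflexivity).
    rewrite PS_mult_assoc. change (fun k0 : nat => PS_mult (dd p t) (dd p t') k0) with (PS_mult (dd p t) (dd p t')). ring.
Qed.

Lemma dd_1 p k : p O <> 0 -> p k = p O * dd p 1 k.
Proof.
  intros H0.
  rewrite <- (dd_unique p 1 (fun k => p k / p O)).
  - field; auto.
  - field; auto.
  - intros m. unfold PS_derive at 1. rewrite Rmult_1_l.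
    rewrite (PS_mult_ext_le (rr p) (fun k => p k / p O) (rr p) (fun k => / p O * p k) m)
      by (intros; unfold Rdiv; try ring; reflexivity).
    rewrite PS_mult_scal_r, rr_spec by auto. unfold PS_derive. field; auto.
Qed.

Lemma cc_rel p t k : p O <> 0 ->
  PS_mult (PS_derive (cc p t)) p k = t * PS_mult (cc p t) (PS_derive p) k.
Proof.
  intros H0.
  rewrite (PS_mult_ext_le (PS_derive (cc p t)) p
     (fun j => (Rpower (p O) t * t) * PS_mult (rr p) (dd p t) j) p k).
  2:{ intros i _. unfold PS_derive, cc. rewrite dd_S. field. apply not_0_INR; lia. }
  2:{ reflexivity. }
  rewrite PS_mult_scal_l.
  rewrite (PS_mult_ext_le (cc p t) (PS_derive p) (fun j => Rpower (p O) t * dd p t j)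
     (PS_mult (rr p) p) k).
  2:{ reflexivity. }
  2:{ intros; rewrite rr_spec; auto. }
  rewrite PS_mult_scal_l.
  rewrite (PS_mult_ext_le (PS_mult (rr p) (dd p t)) p (PS_mult (dd p t) (rr p)) p k)
    by (intros; try apply PS_mult_comm; reflexivity).
  rewrite PS_mult_assoc. ring.
Qed.

Lemma PS_mult_minus_l a b c n : PS_mult (fun k => a k - b k) c n = PS_mult a c n - PS_mult b c n.
Proof. unfold PS_mult. rewrite <- minus_sum. apply sum_eq; intros; ring. Qed.

Lemma R1_unique p t u v : p O <> 0 -> u O = v O ->
  (forall k, PS_mult (PS_derive u) p k = t * PS_mult u (PS_derive p) k) ->
  (forall k, PS_mult (PS_derive v) p k = t * PS_mult v (PS_derive p) k) ->
  forall k, u k = v k.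
Proof.
  intros H0 E0 Hu Hv.
  set (e := fun k => u k - v k).
  assert (He : forall k, PS_mult (PS_derive e) p k = t * PS_mult e (PS_derive p) k).
  { intros k. rewrite (PS_mult_ext_le (PS_derive e) p (fun j => PS_derive u j - PS_derive v j) p k)
      by (intros; unfold e, PS_derive; try ring; reflexivity).
    unfold e. rewrite !PS_mult_minus_l, Hu, Hv. ring. }
  assert (forall k, e k = 0).
  { intros k. induction k as [k IH] using (well_founded_induction Wf_nat.lt_wf).
    destruct k as [|m].
    - unfold e. rewrite E0. ring.
    - specialize (He m).
      assert (Z : PS_mult e (PS_derive p) m = 0).
      { unfold PS_mult. rewrite <- (sum_eq (fun _ => 0)). 
        - clear. induction m; simpl; auto. rewrite IHm. ring.
        - intros i Hi. rewrite IH by lia. ring. }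
      rewrite Z, Rmult_0_r in He.
      assert (L : PS_mult (PS_derive e) p m = INR (S m) * e (S m) * p O).
      { destruct m as [|m'].
        - unfold PS_mult, PS_derive. simpl. ring.
        - rewrite PS_mult_S_last. rewrite <- (Rplus_0_l (INR (S (S m')) * _ * _)).
          f_equal.
          + rewrite <- (sum_eq (fun _ => 0)).
            * clear. induction m'; simpl; auto. rewrite IHm'. ring.
            * intros i Hi. unfold PS_derive. rewrite IH by lia. ring. }
      rewrite L in He.
      assert (INR (S m) <> 0) by (apply not_0_INR; lia).
      destruct (Rmult_integral _ _ He) as [Hx|Hx]; [|contradiction].
      destruct (Rmult_integral _ _ Hx) as [Hy|Hy]; [contradiction|exact Hy]. }
  intros k. specialize (H k). unfold e in H. lra.
Qed.

Lemma sum_nonneg_le f N : (forall i, (i <= N)%nat -> 0 <= f i) -> 0 <= sum_f_R0 f N.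
Proof.
  induction N; intros H; simpl.
  - apply H; lia.
  - apply Rplus_le_le_0_compat. apply IHN; intros; apply H; lia. apply H; lia.
Qed.

Lemma pow_le_1 x n : 0 <= x <= 1 -> x ^ n <= 1.
Proof.
  intros H. induction n; simpl. lra.
  assert (0 <= x ^ n) by (apply pow_le; lra). nra.
Qed.

Lemma dd_bounds p k : (forall j, (j < k)%nat -> 0 <= rr p j) ->
  forall m, (m <= k)%nat -> forall t, 0 <= t <= 1 ->
  0 <= dd p t m <= dd p 1 m /\ ((1 <= m)%nat -> dd p t m <= t * dd p 1 m).
Proof.
  intros Hr m. induction m as [m IH] using (well_founded_induction Wf_nat.lt_wf).
  intros Hm t Ht. destruct m as [|m'].
  - rewrite !dd_0. split; [lra| intros; lia].
  - assert (HX : 0 <= PS_mult (rr p) (dd p t) m' <= PS_mult (rr p) (dd p 1) m').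
    { unfold PS_mult. split.
      - apply sum_nonneg_le. intros i Hi. apply Rmult_le_pos. apply Hr; lia.
        apply (IH (m' - i)%nat); try lia; auto.
      - apply sum_Rle. intros i Hi. apply Rmult_le_compat_l. apply Hr; lia.
        apply (IH (m' - i)%nat); try lia; auto. }
    rewrite !dd_S.
    assert (HS : 0 < INR (S m')) by (apply lt_0_INR; lia).
    assert (0 <= / INR (S m')) by (left; apply Rinv_0_lt_compat; auto).
    unfold Rdiv. split; [split|].
    + apply Rmult_le_pos; [apply Rmult_le_pos|]; lra.
    + rewrite Rmult_1_l. rewrite Rmult_assoc. rewrite <- (Rmult_1_l (_ * PS_mult (rr p) (dd p 1) m')).
      apply Rmult_le_compat; try lra. apply Rmult_le_pos; lra.
      apply Rmult_le_compat_l; lra.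
    + intros _. rewrite Rmult_1_l, !Rmult_assoc. apply Rmult_le_compat_l; try lra.
      apply Rmult_le_compat_l; lra.
Qed.

Lemma rr_nonneg p a : 0 < a < 1 -> (forall n k, 0 <= dd p (a ^ n) k) -> forall k, 0 <= rr p k.
Proof.
  intros Ha Hd k. induction k as [k IH] using (well_founded_induction Wf_nat.lt_wf).
  destruct (Rle_or_lt 0 (rr p k)) as [|Hneg]; auto. exfalso.
  assert (HB := dd_bounds p k IH).
  assert (Hsplit : forall t, PS_mult (rr p) (dd p t) k = rr p k +
     match k with O => 0 | S k' => sum_f_R0 (fun j => rr p j * dd p t (S k' - j)%nat) k' end).
  { intros t. destruct k as [|k'].
    - unfold PS_mult. simpl. rewrite dd_0. ring.
    - rewrite PS_mult_S_last, dd_0. ring. }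
  set (X1 := match k with O => 0 | S k' => sum_f_R0 (fun j => rr p j * dd p 1 (S k' - j)%nat) k' end).
  assert (HX : forall t, 0 <= t <= 1 ->
     match k with O => 0 | S k' => sum_f_R0 (fun j => rr p j * dd p t (S k' - j)%nat) k' end <= t * X1).
  { intros t Ht. unfold X1. destruct k as [|k'].
    - lra.
    - rewrite scal_sum. apply sum_Rle. intros i Hi.
      assert (0 <= rr p i) by (apply IH; lia).
      destruct (HB (S k' - i)%nat ltac:(lia) t Ht) as [_ H2].
      specialize (H2 ltac:(lia)).
      replace (rr p i * dd p 1 (S k' - i)%nat * t) with (rr p i * (t * dd p 1 (S k' - i)%nat)) by ring. apply Rmult_le_compat_l; auto. }
  assert (HX1 : 0 <= X1).
  { unfold X1. destruct k as [|k']. lra. apply sum_nonneg_le. intros i Hi.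
    apply Rmult_le_pos. apply IH; lia. apply (HB (S k' - i)%nat ltac:(lia) 1 ltac:(lra)). }
  destruct (pow_lt_1_zero a ltac:(rewrite Rabs_pos_eq; lra) (- rr p k / (X1 + 1)))
    as [N HN].
  { apply Rdiv_lt_0_compat; lra. }
  specialize (HN N (le_n N)). rewrite Rabs_pos_eq in HN by (apply pow_le; lra).
  assert (Hpos : 0 < a ^ N) by (apply pow_lt; lra).
  assert (Hle1 : a ^ N <= 1) by (apply pow_le_1; lra).
  specialize (Hd N (S k)). rewrite dd_S, Hsplit in Hd.
  specialize (HX (a ^ N) ltac:(lra)).
  assert (HN' : a ^ N * (X1 + 1) < - rr p k).
  { apply (Rmult_lt_compat_r (X1 + 1)) in HN; [|lra].
    unfold Rdiv in HN. rewrite Rmult_assoc, Rinv_l, Rmult_1_r in HN by lra. exact HN. }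
  assert (0 < INR (S k)) by (apply lt_0_INR; lia).
  assert (rr p k + match k with O => 0 | S k' => sum_f_R0 (fun j => rr p j * dd p (a ^ N) (S k' - j)%nat) k' end < 0) by nra.
  assert (0 < a ^ N / INR (S k)) by (apply Rdiv_lt_0_compat; auto).
  nra.
Qed.

Lemma PSeries_R a x : PSeries a x = Series (fun k => a k * x ^ k).
Proof.
  apply Series_ext. intros n. reflexivity.
Qed.

Lemma pgf_PS u s : pgf u s = PSeries u s.
Proof. unfold pgf. rewrite PSeries_R. reflexivity. Qed.

Lemma is_series_lim a l : is_series a l -> is_lim_seq (sum_n a) l.
Proof. intros H. exact H. Qed.

Lemma term_le_series u l n : (forall k, 0 <= u k) -> is_series u l -> u n <= l.
Proof.
  intros Hu Hl. apply Rle_trans with (sum_n u n).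
  - rewrite sum_n_Reals. destruct n. simpl; lra. rewrite tech5.
    assert (0 <= sum_f_R0 u n) by (apply cond_pos_sum; auto). lra.
  - apply (is_lim_seq_incr_compare (sum_n u) l). apply is_series_lim; auto.
    intros m. rewrite sum_Sn. unfold plus; simpl. specialize (Hu (S m)). lra.
Qed.

Lemma pmf_radius u : pmf_I0 u -> Rbar_le 1 (CV_radius u).
Proof.
  intros [Hu Hs]. destruct (CV_radius_bounded u) as [Hub _].
  apply Hub. exists 1. intros n. rewrite pow1, Rmult_1_r, Rabs_pos_eq by auto.
  apply (term_le_series u 1 n Hu Hs).
Qed.

Lemma rad_lt u x : Rbar_le 1 (CV_radius u) -> Rabs x < 1 -> Rbar_lt (Rabs x) (CV_radius u).
Proof.
  intros H Hx. eapply Rbar_lt_le_trans; [|exact H]. simpl. exact Hx.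
Qed.

Lemma cont_zero f : continuity_pt f 0 -> (forall x, 0 < x < 1 -> f x = 0) -> f 0 = 0.
Proof.
  intros Hc Hz. destruct (Req_dec (f 0) 0) as [|Hne]; auto. exfalso.
  assert (He : 0 < Rabs (f 0)) by (apply Rabs_pos_lt; auto).
  destruct (Hc (Rabs (f 0)) He) as [alp [Halp Hx]].
  set (x := Rmin (alp / 2) (1 / 2)).
  assert (Hx0 : 0 < x) by (unfold x; apply Rmin_pos; lra).
  assert (Hx1 : x < 1) by (unfold x; pose proof (Rmin_r (alp/2) (1/2)); lra).
  assert (Hxa : x < alp) by (unfold x; pose proof (Rmin_l (alp/2) (1/2)); lra).
  specialize (Hx x). simpl in Hx. unfold R_dist in Hx.
  rewrite Hz in Hx by lra.
  assert (Rabs (0 - f 0) < Rabs (f 0)).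
  { apply Hx. split. split; [exact I| lra]. rewrite Rminus_0_r, Rabs_pos_eq; lra. }
  rewrite Rabs_minus_sym, Rminus_0_r in H. lra.
Qed.

Lemma PS_zero_unique k : forall w, Rbar_le 1 (CV_radius w) ->
  (forall x, 0 < x < 1 -> PSeries w x = 0) -> w k = 0.
Proof.
  assert (base : forall w, Rbar_le 1 (CV_radius w) ->
    (forall x, 0 < x < 1 -> PSeries w x = 0) -> w O = 0).
  { intros w Hr Hz. rewrite <- PSeries_0. apply cont_zero; auto.
    apply PSeries_continuity. apply rad_lt; auto. rewrite Rabs_R0; lra. }
  induction k as [|k IH]; intros w Hr Hz.
  - apply base; auto.
  - change (w (S k)) with (PS_decr_1 w k). apply IH.
    + rewrite CV_radius_decr_1. auto.
    + intros x Hx. pose proof (base w Hr Hz) as H0. specialize (Hz x Hx). rewrite PSeries_decr_1 in Hz.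
      * rewrite H0 in Hz.
        apply (Rmult_eq_reg_l x); [|lra]. lra.
      * apply CV_radius_inside. apply rad_lt; auto. rewrite Rabs_pos_eq; lra.
Qed.

Lemma term_le_sum f n N : (forall i, 0 <= f i) -> (n <= N)%nat -> f n <= sum_f_R0 f N.
Proof.
  intros Hf Hn. induction N.
  - assert (n = O) by lia. subst. simpl. lra.
  - destruct (Nat.eq_dec n (S N)) as [->|].
    + rewrite tech5. assert (0 <= sum_f_R0 f N) by (apply cond_pos_sum; auto). lra.
    + rewrite tech5. specialize (Hf (S N)). assert (f n <= sum_f_R0 f N) by (apply IHN; lia). lra.
Qed.

Lemma lim0_bounded u : is_lim_seq u 0 -> exists M, forall n, Rabs (u n) <= M.
Proof.
  intros H. apply is_lim_seq_Reals in H.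
  destruct (H 1 ltac:(lra)) as [N HN].
  exists (1 + sum_f_R0 (fun i => Rabs (u i)) N). intros n.
  assert (0 <= sum_f_R0 (fun i => Rabs (u i)) N) by (apply cond_pos_sum; intros; apply Rabs_pos).
  destruct (Compare_dec.le_lt_dec N n) as [Hn|Hn].
  - specialize (HN n Hn). unfold R_dist in HN. rewrite Rminus_0_r in HN. lra.
  - assert (Rabs (u n) <= sum_f_R0 (fun i => Rabs (u i)) N).
    { apply (term_le_sum (fun i => Rabs (u i))). intros; apply Rabs_pos. lia. }
    lra.
Qed.

Lemma rad_from_ex w : (forall x, 0 <= x < 1 -> ex_pseries w x) -> Rbar_le 1 (CV_radius w).
Proof.
  intros Hex. destruct (CV_radius_bounded w) as [Hub _].
  assert (Hr : forall r, 0 <= r < 1 -> Rbar_le r (CV_radius w)).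
  { intros r Hr. apply Hub. specialize (Hex r Hr).
    apply ex_series_lim_0 in Hex. apply lim0_bounded in Hex. destruct Hex as [M HM].
    exists M. intros n. specialize (HM n). rewrite pow_n_pow in HM.
    unfold scal in HM; simpl in HM; unfold mult in HM; simpl in HM.
    rewrite Rmult_comm. exact HM. }
  destruct (CV_radius w) as [l| |] eqn:E.
  - simpl. destruct (Rle_or_lt 1 l) as [|Hl]; auto. exfalso.
    set (r := (Rmax l 0 + 1) / 2).
    assert (0 <= r < 1) by (unfold r; pose proof (Rmax_r l 0); pose proof (Rmax_lub_lt l 0 1 Hl ltac:(lra)); lra).
    specialize (Hr r H). simpl in Hr. unfold r in Hr. pose proof (Rmax_l l 0). lra.
  - simpl. exact I.
  - specialize (Hr 0 ltac:(lra)). simpl in Hr. exact Hr.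
Qed.

Lemma pgf_0 u : pgf u 0 = u O.
Proof. rewrite pgf_PS. apply PSeries_0. Qed.

Lemma Rpower_pos x y : 0 < Rpower x y.
Proof. unfold Rpower. apply exp_pos. Qed.

Lemma ident p g t : pmf_I0 p -> pmf_I0 g -> p O <> 0 ->
  (forall s, 0 <= s <= 1 -> 0 < pgf p s) ->
  (forall s, 0 <= s <= 1 -> pgf g s = Rpower (pgf p s) t) ->
  forall k, g k = cc p t k.
Proof.
  intros Hp Hg H0 Hpos Heq.
  assert (Rp := pmf_radius p Hp). assert (Rg := pmf_radius g Hg).
  assert (Rdp : Rbar_le 1 (CV_radius (PS_derive p))) by (rewrite CV_radius_derive; auto).
  assert (Rdg : Rbar_le 1 (CV_radius (PS_derive g))) by (rewrite CV_radius_derive; auto).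
  apply (R1_unique p t); auto.
  - rewrite <- pgf_0, Heq by lra. unfold cc. rewrite dd_0, pgf_0. ring.
  - intros k.
    set (w := PS_plus (PS_mult (PS_derive g) p) (PS_scal (- t) (PS_mult g (PS_derive p)))).
    assert (Hex : forall x, 0 <= x < 1 -> ex_pseries w x).
    { intros x Hx. assert (Rabs x < 1) by (rewrite Rabs_pos_eq; lra).
      apply ex_pseries_plus. apply ex_pseries_mult; apply rad_lt; auto.
      apply ex_pseries_scal. unfold mult; simpl; ring.
      apply ex_pseries_mult; apply rad_lt; auto. }
    assert (Hw : w k = 0).
    { apply PS_zero_unique. apply rad_from_ex; auto.
      intros x Hx. assert (Hax : Rabs x < 1) by (rewrite Rabs_pos_eq; lra).
      unfold w. rewrite PSeries_plus.
      2:{ apply ex_pseries_mult; apply rad_lt; auto. }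
      2:{ apply ex_pseries_scal. unfold mult; simpl; ring.
          apply ex_pseries_mult; apply rad_lt; auto. }
      rewrite PSeries_scal, !PSeries_mult by (apply rad_lt; auto).
      assert (HPx : 0 < PSeries p x) by (rewrite <- pgf_PS; apply Hpos; lra).
      assert (D1 : is_derive (PSeries g) x (PSeries (PS_derive g) x)).
      { apply is_derive_PSeries. apply rad_lt; auto. }
      assert (D2 : is_derive (fun y => Rpower (PSeries p y) t) x
                     (scal (PSeries (PS_derive p) x) (t * Rpower (PSeries p x) (t - 1)))).
      { apply (is_derive_comp (fun z => Rpower z t) (PSeries p)).
        - apply is_derive_Reals. apply derivable_pt_lim_power. auto.
        - apply is_derive_PSeries. apply rad_lt; auto. }
      assert (Hloc : locally x (fun y => Rpower (PSeries p y) t = PSeries g y)).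
      { assert (Ho : open (fun y : R => 0 < y /\ y < 1)) by (apply open_and; [apply open_gt|apply open_lt]).
        apply (filter_imp (fun y : R => 0 < y /\ y < 1)).
        - intros y Hy. pose proof (Heq y ltac:(lra)) as E. rewrite !pgf_PS in E. auto.
        - apply Ho. lra. }
      apply (is_derive_ext_loc _ _ _ _ Hloc) in D2.
      apply is_derive_unique in D1. apply is_derive_unique in D2.
      rewrite D1 in D2. rewrite D2. unfold scal; simpl; unfold mult; simpl.
      replace (PSeries g x) with (Rpower (PSeries p x) t)
        by (pose proof (Heq x ltac:(lra)) as E; rewrite !pgf_PS in E; auto).
      replace (Rpower (PSeries p x) t) with (Rpower (PSeries p x) (t - 1) * PSeries p x).
      + ring.
      + rewrite <- (Rpower_1 (PSeries p x)) at 2 by auto. rewrite <- Rpower_plus. f_equal. ring. }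
    unfold w, PS_plus, PS_scal in Hw. unfold plus, scal in Hw; simpl in Hw. unfold mult in Hw; simpl in Hw.
    unfold plus in Hw; simpl in Hw. lra.
  - intros k. apply cc_rel; auto.
Qed.

Lemma partial_le_series a l n : (forall k, 0 <= a k) -> is_series a l -> sum_f_R0 a n <= l.
Proof.
  intros Ha Hl. rewrite <- sum_n_Reals.
  apply (is_lim_seq_incr_compare (sum_n a) l). apply is_series_lim; auto.
  intros m. rewrite sum_Sn. unfold plus; simpl. specialize (Ha (S m)). lra.
Qed.

Lemma sum_mono f m n : (forall i, 0 <= f i) -> (m <= n)%nat -> sum_f_R0 f m <= sum_f_R0 f n.
Proof.
  intros Hf Hmn. induction Hmn. lra. simpl. specialize (Hf (S m0)). lra.
Qed.

Lemma sum_swap (f : nat -> nat -> R) n m :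
  sum_f_R0 (fun j => sum_f_R0 (fun k => f j k) m) n = sum_f_R0 (fun k => sum_f_R0 (fun j => f j k) n) m.
Proof.
  induction n as [|n IH]; simpl. reflexivity.
  rewrite IH, <- plus_sum. reflexivity.
Qed.

Lemma sum_zero_tail f j N : (forall k, (j < k)%nat -> f k = 0) -> (j <= N)%nat ->
  sum_f_R0 f N = sum_f_R0 f j.
Proof.
  intros Hz HjN. induction HjN. reflexivity. simpl. rewrite Hz by lia. lra.
Qed.

Lemma fubini_tri (A : nat -> nat -> R) Stot :
  (forall j k, 0 <= A j k) -> (forall j k, (j < k)%nat -> A j k = 0) ->
  is_series (fun j => sum_f_R0 (fun k => A j k) j) Stot ->
  (forall k, ex_series (fun j => A j k)) /\ is_series (fun k => Series (fun j => A j k)) Stot.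
Proof.
  intros Hpos Hz HS.
  set (R := fun j => sum_f_R0 (fun k => A j k) j).
  assert (HR : forall j N, sum_f_R0 (fun k => A j k) N <= R j).
  { intros j N. unfold R. destruct (Compare_dec.le_lt_dec N j).
    - apply sum_mono; auto.
    - rewrite (sum_zero_tail _ j N); [lra| |lia]. intros; apply Hz; auto. }
  assert (Hcol : forall k, ex_series (fun j => A j k)).
  { intros k. apply (@ex_series_le R_AbsRing R_CompleteNormedModule _ R).
    - intros j. unfold norm; simpl. unfold abs; simpl. rewrite Rabs_pos_eq by auto.
      eapply Rle_trans; [|apply (HR j k)]. apply term_le_sum; auto.
    - exists Stot. exact HS. }
  split; auto.
  set (C := fun k => Series (fun j => A j k)).
  assert (HCser : forall N, is_series (fun j => sum_f_R0 (fun k => A j k) N) (sum_f_R0 C N)).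
  { induction N; simpl.
    - apply Series_correct. auto.
    - apply (is_series_plus _ _ _ _ IHN (Series_correct _ (Hcol (S N)))). }
  assert (Hup : forall N, sum_f_R0 C N <= Stot).
  { intros N. rewrite <- (is_series_unique _ _ (HCser N)), <- (is_series_unique _ _ HS).
    apply Series_le. intros j. split. apply cond_pos_sum; auto. apply HR. exists Stot; exact HS. }
  assert (Hlow : forall N, sum_f_R0 R N <= sum_f_R0 C N).
  { intros N. rewrite (sum_eq R (fun j => sum_f_R0 (fun k => A j k) N)).
    - rewrite sum_swap. apply sum_Rle. intros k Hk. unfold C.
      apply partial_le_series; auto. apply Series_correct; auto.
    - intros j Hj. unfold R. symmetry. apply sum_zero_tail; auto. }
  assert (HL : is_lim_seq (sum_n C) Stot).
  { apply (is_lim_seq_le_le (sum_n R) (sum_n C) (fun _ => Stot)).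
    - intros N. rewrite !sum_n_Reals. split; auto.
    - exact HS.
    - apply is_lim_seq_const. }
  exact HL.
Qed.

Lemma pgf_ex p x : pmf_I0 p -> 0 <= x <= 1 -> ex_series (fun n => p n * x ^ n).
Proof.
  intros [Hp Hs] Hx. apply (@ex_series_le R_AbsRing R_CompleteNormedModule _ p).
  - intros n. unfold norm; simpl. unfold abs; simpl.
    rewrite Rabs_pos_eq by (apply Rmult_le_pos; auto; apply pow_le; lra).
    rewrite <- (Rmult_1_r (p n)) at 2. apply Rmult_le_compat_l; auto. apply pow_le_1; lra.
  - exists 1; auto.
Qed.

Lemma pgf_is p x : pmf_I0 p -> 0 <= x <= 1 -> is_series (fun n => p n * x ^ n) (pgf p x).
Proof. intros. apply Series_correct. apply pgf_ex; auto. Qed.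

Lemma pgf_1 p : pmf_I0 p -> pgf p 1 = 1.
Proof.
  intros [Hp Hs]. unfold pgf. rewrite (Series_ext _ p). apply is_series_unique; auto.
  intros n. rewrite pow1. ring.
Qed.

Lemma C_pos n k : 0 <= Binomial.C n k.
Proof.
  unfold Binomial.C. apply Rmult_le_pos. apply pos_INR.
  left. apply Rinv_0_lt_compat. apply Rmult_lt_0_compat; apply INR_fact_lt_0.
Qed.

Lemma thinning p beta : pmf_I0 p -> 0 <= beta <= 1 ->
  exists q, pmf_I0 q /\ forall s, 0 <= s <= 1 -> pgf q s = pgf p (1 - beta + beta * s).
Proof.
  intros Hp Hb. destruct Hp as [Hp0 Hp1].
  set (B := fun j k => if Nat.leb k j then p j * Binomial.C j k * beta ^ k * (1 - beta) ^ (j - k) else 0).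
  assert (HBpos : forall j k, 0 <= B j k).
  { intros j k. unfold B. destruct (Nat.leb k j). 2: lra.
    apply Rmult_le_pos; [apply Rmult_le_pos; [apply Rmult_le_pos; [auto | apply C_pos] | apply pow_le; lra] | apply pow_le; lra]. }
  assert (Hmain : forall s, 0 <= s <= 1 ->
     (forall k, ex_series (fun j => B j k * s ^ k)) /\
     is_series (fun k => Series (fun j => B j k * s ^ k)) (pgf p (1 - beta + beta * s))).
  { intros s Hs. apply fubini_tri.
    - intros; apply Rmult_le_pos; auto. apply pow_le; lra.
    - intros j k Hjk. unfold B. replace (Nat.leb k j) with false by (symmetry; apply Nat.leb_gt; lia). ring.
    - apply (is_series_ext (fun n => p n * (1 - beta + beta * s) ^ n)).
      + intros j. replace (1 - beta + beta * s) with (beta * s + (1 - beta)) by ring.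
        rewrite binomial, scal_sum. apply sum_eq. intros i Hi. unfold B.
        replace (Nat.leb i j) with true by (symmetry; apply Nat.leb_le; lia).
        rewrite Rpow_mult_distr. ring.
      + apply pgf_is. split; auto. nra. }
  set (q := fun k => Series (fun j => B j k)).
  assert (Hq : forall s, 0 <= s <= 1 -> is_series (fun k => q k * s ^ k) (pgf p (1 - beta + beta * s))).
  { intros s Hs. destruct (Hmain s Hs) as [_ H]. eapply is_series_ext; [|exact H].
    intros k. unfold q. apply Series_scal_r. }
  assert (Hcol : forall k, ex_series (fun j => B j k)).
  { intros k. destruct (Hmain 1 ltac:(lra)) as [H _]. specialize (H k).
    eapply ex_series_ext; [|exact H]. intros j. simpl. rewrite pow1. ring. }
  exists q. split; [split|].
  - intros k. apply Rle_trans with (sum_f_R0 (fun j => B j k) 0). simpl; auto.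
    apply partial_le_series; auto. apply Series_correct; auto.
  - specialize (Hq 1 ltac:(lra)). replace (1 - beta + beta * 1) with 1 in Hq by ring.
    rewrite pgf_1 in Hq by (split; auto). eapply is_series_ext; [|exact Hq].
    intros k. cbv beta. rewrite pow1. apply Rmult_1_r.
  - intros s Hs. unfold pgf at 1. apply is_series_unique. apply Hq; auto.
Qed.

Lemma ex_series_bounded u M : (forall k, 0 <= u k) -> (forall N, sum_f_R0 u N <= M) -> ex_series u.
Proof.
  intros Hu HM.
  destruct (Un_cv_crit (sum_f_R0 u)) as [l Hl].
  - intros n. simpl. specialize (Hu (S n)). lra.
  - exists M. intros x [i ->]. auto.
  - exists l. assert (H : is_lim_seq (sum_n u) l).
    { apply is_lim_seq_ext with (sum_f_R0 u). intros; rewrite sum_n_Reals; auto.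
      apply is_lim_seq_Reals. auto. }
    exact H.
Qed.

Lemma PS_mult_pow c1 c2 s n :
  sum_f_R0 (fun j => c1 j * s ^ j * (c2 (n - j)%nat * s ^ (n - j))) n = PS_mult c1 c2 n * s ^ n.
Proof.
  unfold PS_mult. rewrite Rmult_comm, scal_sum. apply sum_eq. intros j Hj.
  replace (s ^ n) with (s ^ j * s ^ (n - j)) by (rewrite <- pow_add; f_equal; lia). ring.
Qed.

Lemma pgf_mult c1 c2 s : (forall k, 0 <= c1 k) -> (forall k, 0 <= c2 k) -> 0 <= s ->
  ex_series (fun k => c1 k * s ^ k) -> ex_series (fun k => c2 k * s ^ k) ->
  is_series (fun k => PS_mult c1 c2 k * s ^ k) (pgf c1 s * pgf c2 s).
Proof.
  intros H1 H2 Hs E1 E2.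
  eapply is_series_ext; [intros n; apply PS_mult_pow|].
  apply (is_series_mult_pos (fun k => c1 k * s ^ k) (fun k => c2 k * s ^ k));
    try (apply Series_correct; auto);
    intros; apply Rmult_le_pos; auto; apply pow_le; auto.
Qed.

Lemma dd_nonneg p t : 0 <= t -> (forall k, 0 <= rr p k) -> forall k, 0 <= dd p t k.
Proof.
  intros Ht Hr k. induction k as [k IH] using (well_founded_induction Wf_nat.lt_wf).
  destruct k as [|m]. rewrite dd_0; lra.
  rewrite dd_S. apply Rmult_le_pos.
  - apply Rdiv_le_0_compat; auto. apply lt_0_INR; lia.
  - unfold PS_mult. apply sum_nonneg_le. intros i Hi. apply Rmult_le_pos; auto. apply IH; lia.
Qed.

Lemma cc_nonneg p t : 0 <= t -> (forall k, 0 <= rr p k) -> forall k, 0 <= cc p t k.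
Proof.
  intros. unfold cc. apply Rmult_le_pos. left; apply Rpower_pos. apply dd_nonneg; auto.
Qed.

Lemma cc_add p t t' k : PS_mult (cc p t) (cc p t') k = cc p (t + t') k.
Proof.
  unfold cc. rewrite PS_mult_scal_l, PS_mult_scal_r, <- dd_add, Rpower_plus. ring.
Qed.

Lemma cc_1 p k : 0 < p O -> cc p 1 k = p k.
Proof. intros H. unfold cc. rewrite Rpower_1 by auto. symmetry. apply dd_1. lra. Qed.

Lemma conv_lemma p t s : pmf_I0 p -> 0 < p O -> (forall k, 0 <= rr p k) ->
  0 <= t <= 1 -> 0 <= s <= 1 ->
  ex_series (fun k => cc p t k * s ^ k) /\ pgf (cc p t) s * pgf (cc p (1 - t)) s = pgf p s.
Proof.
  intros Hp H0 Hr Ht Hs.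
  assert (C1 := cc_nonneg p t ltac:(lra) Hr). assert (C2 := cc_nonneg p (1 - t) ltac:(lra) Hr).
  assert (Hprod' : forall t1 k, PS_mult (cc p t1) (cc p (1 - t1)) k = p k).
  { intros t1 k. rewrite cc_add. replace (t1 + (1 - t1)) with 1 by ring. apply cc_1; auto. }
  assert (Hprod := Hprod' t).
  assert (Hex : forall t1, 0 <= t1 <= 1 -> ex_series (fun k => cc p t1 k * s ^ k)).
  { intros t1 Ht1.
    assert (D1 := cc_nonneg p t1 ltac:(lra) Hr). assert (D2 := cc_nonneg p (1 - t1) ltac:(lra) Hr).
    assert (Hv0 : 0 < cc p (1 - t1) O) by (unfold cc; rewrite dd_0, Rmult_1_r; apply Rpower_pos).
    apply (ex_series_bounded _ (pgf p s / cc p (1 - t1) O)).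
    - intros; apply Rmult_le_pos; auto; apply pow_le; lra.
    - intros N. apply (Rmult_le_reg_r (cc p (1 - t1) O)); auto.
      unfold Rdiv. rewrite Rmult_assoc, Rinv_l, Rmult_1_r by lra.
      apply Rle_trans with (sum_f_R0 (fun k => p k * s ^ k) N).
      + rewrite Rmult_comm, scal_sum. apply sum_Rle. intros k Hk.
        rewrite <- (Hprod' t1 k). rewrite <- PS_mult_pow.
        destruct k as [|k'].
        * simpl. lra.
        * rewrite tech5, Nat.sub_diag.
          assert (0 <= sum_f_R0 (fun j => cc p t1 j * s ^ j * (cc p (1 - t1) (S k' - j)%nat * s ^ (S k' - j))) k').
          { apply cond_pos_sum. intros; apply Rmult_le_pos; [apply Rmult_le_pos; [apply D1|apply pow_le; lra] | apply Rmult_le_pos; [apply D2|apply pow_le; lra]]. }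
          assert (0 <= cc p t1 (S k') * s ^ S k') by (apply Rmult_le_pos; [apply D1|apply pow_le; lra]).
          simpl (s ^ 0). lra.
      + apply partial_le_series. intros; apply Rmult_le_pos; [apply Hp|apply pow_le; lra].
        apply pgf_is; auto. }
  split. apply Hex; auto.
  assert (HM := pgf_mult _ _ s C1 C2 ltac:(lra) (Hex t Ht) (Hex (1 - t) ltac:(lra))).
  rewrite <- (is_series_unique _ _ HM). unfold pgf. apply Series_ext. intros k. rewrite Hprod. reflexivity.
Qed.

Lemma Rpower_1_base y : Rpower 1 y = 1.
Proof. unfold Rpower. rewrite ln_1, Rmult_0_r. apply exp_0. Qed.

Lemma pgf_ext u v s : (forall k, u k = v k) -> pgf u s = pgf v s.
Proof. intros H. unfold pgf. apply Series_ext. intros; rewrite H; auto. Qed.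

Lemma pgf_nonneg u s : (forall k, 0 <= u k) -> ex_series (fun k => u k * s ^ k) -> 0 <= s -> 0 <= pgf u s.
Proof.
  intros Hu He Hs. apply Rle_trans with (sum_f_R0 (fun k => u k * s ^ k) 0).
  simpl. rewrite Rmult_1_r. auto.
  apply partial_le_series. intros; apply Rmult_le_pos; auto; apply pow_le; auto.
  apply Series_correct; auto.
Qed.

Lemma pow_eq_1 x n : 0 <= x -> (1 <= n)%nat -> x ^ n = 1 -> x = 1.
Proof.
  intros Hx Hn H. destruct (Rtotal_order x 1) as [Hlt|[He|Hgt]]; auto.
  - pose proof (pow_lt_1_compat x n ltac:(lra) ltac:(lia)). lra.
  - pose proof (Rlt_pow_R1 x n Hgt ltac:(lia)). lra.
Qed.

Theorem theorem2p3 (b alpha a : R) (p : nat -> R) :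
  0 < b < 1 -> 0 < alpha <= 1 -> a = Rpower b alpha ->
  disc_semi_stable a b p -> disc_semi_selfdecomp b p.
Proof.
  intros Hb Hal Ha [Hp Hss].
  assert (Ha01 : 0 < a < 1).
  { subst a. split. apply Rpower_pos. unfold Rpower. rewrite <- exp_0.
    apply exp_increasing. assert (ln b < 0) by (rewrite <- ln_1; apply ln_increasing; lra). nra. }
  assert (Hp0 : 0 < p O).
  { destruct (Hss 0 ltac:(lra)) as [Hne _]. rewrite pgf_0 in Hne.
    destruct Hp as [Hpn _]. specialize (Hpn O). lra. }
  assert (Hpos : forall s, 0 <= s <= 1 -> 0 < pgf p s).
  { intros s Hs. apply Rlt_le_trans with (sum_f_R0 (fun k => p k * s ^ k) 0).
    simpl. lra. apply partial_le_series. intros; apply Rmult_le_pos; [apply Hp|apply pow_le; lra].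
    apply pgf_is; auto. }
  assert (Hiter : forall n s, 0 <= s <= 1 -> pgf p (1 - b ^ n + b ^ n * s) = Rpower (pgf p s) (a ^ n)).
  { induction n as [|n IH]; intros s Hs.
    - simpl. replace (1 - 1 + 1 * s) with s by ring. rewrite Rpower_1; auto.
    - assert (0 <= b ^ n <= 1) by (split; [apply pow_le; lra| apply pow_le_1; lra]).
      set (y := 1 - b ^ n + b ^ n * s).
      assert (Hy : 0 <= y <= 1) by (unfold y; nra).
      replace (1 - b ^ S n + b ^ S n * s) with (1 - b + b * y) by (unfold y; simpl; ring).
      destruct (Hss y Hy) as [_ E]. rewrite <- E. unfold y. rewrite IH by auto.
      rewrite Rpower_mult. f_equal. simpl. ring. }
  assert (Hid : forall n, exists q, pmf_I0 q /\ forall k, q k = cc p (a ^ n) k).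
  { intros n. destruct (thinning p (b ^ n) Hp) as [q [Hq Hqs]].
    split; [apply pow_le; lra| apply pow_le_1; lra].
    exists q. split; auto. apply ident; auto. lra.
    intros s Hs. rewrite Hqs by auto. apply Hiter; auto. }
  assert (Hdd : forall n k, 0 <= dd p (a ^ n) k).
  { intros n k. destruct (Hid n) as [q [[Hq _] Hqc]]. specialize (Hq k). rewrite Hqc in Hq.
    unfold cc in Hq. assert (0 < Rpower (p O) (a ^ n)) by apply Rpower_pos. nra. }
  assert (Hr := rr_nonneg p a Ha01 Hdd).
  assert (Hca : forall s, 0 <= s <= 1 -> pgf (cc p a) s = Rpower (pgf p s) a).
  { destruct (Hid 1%nat) as [q [Hq Hqc]]. rewrite pow_1 in Hqc.
    destruct (thinning p b Hp ltac:(lra)) as [q' [Hq' Hqs']].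
    assert (E : forall k, q' k = cc p a k).
    { apply ident; auto. lra. intros s Hs. rewrite Hqs' by auto. destruct (Hss s Hs); auto. }
    intros s Hs. rewrite <- (pgf_ext q'), Hqs' by auto. destruct (Hss s Hs) as [_ E2]. auto. }
  set (t0 := 1 - a).
  assert (Ht0 : 0 < t0 < 1) by (unfold t0; lra).
  assert (Hconv := fun t s Ht Hs => conv_lemma p t s Hp Hp0 Hr Ht Hs).
  assert (Hcn := fun t Ht => cc_nonneg p t Ht Hr).
  assert (Hpow : forall u s m, 0 <= u -> INR (S m) * u <= 1 -> 0 <= s <= 1 ->
             pgf (cc p u) s ^ (S m) = pgf (cc p (INR (S m) * u)) s).
  { intros u s m Hu Hmu Hs. induction m as [|m IH].
    - simpl. rewrite Rmult_1_r, Rmult_1_l. reflexivity.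
    - assert (Hm1 : INR (S m) * u <= 1).
      { rewrite (S_INR (S m)) in Hmu. pose proof (pos_INR (S m)). nra. }
      assert (Hu1 : u <= 1) by (rewrite (S_INR (S m)) in Hmu; pose proof (pos_INR (S m)); nra).
      rewrite <- tech_pow_Rmult, IH by auto.
      assert (HM := pgf_mult (cc p u) (cc p (INR (S m) * u)) s (Hcn u Hu)
                      (Hcn (INR (S m) * u) ltac:(apply Rmult_le_pos; [apply pos_INR|exact Hu])) ltac:(lra)
                      (proj1 (Hconv u s ltac:(lra) Hs))
                      (proj1 (Hconv (INR (S m) * u) s ltac:(split; [apply Rmult_le_pos; [apply pos_INR|exact Hu]|exact Hm1]) Hs))).
      rewrite <- (is_series_unique _ _ HM). unfold pgf. apply Series_ext. intros k.
      rewrite cc_add. f_equal. f_equal. rewrite (S_INR (S m)). ring. }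
  split; auto.
  exists (cc p t0).
  assert (Hcsum : pgf (cc p t0) 1 = 1).
  { destruct (Hconv a 1 ltac:(lra) ltac:(lra)) as [_ E]. fold t0 in E.
    rewrite (Hca 1 ltac:(lra)) in E. rewrite (pgf_1 p Hp), Rpower_1_base in E. lra. }
  assert (Hpmf : forall t, 0 <= t <= 1 -> pgf (cc p t) 1 = 1 -> pmf_I0 (cc p t)).
  { intros t Ht H1. split. apply Hcn; lra.
    destruct (Hconv t 1 Ht ltac:(lra)) as [Ex _]. apply Series_correct in Ex.
    unfold pgf in H1. rewrite H1 in Ex. eapply is_series_ext; [|exact Ex].
    intros k. cbv beta. rewrite pow1. apply Rmult_1_r. }
  split; [split|].
  - apply Hpmf; auto; lra.
  - intros n Hn. exists (cc p (t0 / INR n)).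
    assert (HnR : 0 < INR n) by (apply lt_0_INR; lia).
    assert (Hu : 0 <= t0 / INR n) by (apply Rdiv_le_0_compat; lra).
    destruct n as [|m]; [lia|].
    assert (Heq : INR (S m) * (t0 / INR (S m)) = t0) by (field; lra).
    assert (HP : forall s, 0 <= s <= 1 -> pgf (cc p (t0 / INR (S m))) s ^ S m = pgf (cc p t0) s).
    { intros s Hs. rewrite Hpow by (auto; lra). rewrite Heq. reflexivity. }
    split; auto.
    apply Hpmf.
    + split; auto. apply Rle_trans with t0; [|lra].
      rewrite <- Heq at 2. rewrite <- (Rmult_1_l (t0 / INR (S m))) at 1.
      apply Rmult_le_compat_r; auto. rewrite S_INR; pose proof (pos_INR m); lra.
    + apply (pow_eq_1 _ (S m)); [|lia|].
      * apply pgf_nonneg. apply Hcn; auto.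
        apply (Hconv _ 1); [|lra]. split; auto. apply Rle_trans with t0; [|lra].
        rewrite <- Heq at 2. rewrite <- (Rmult_1_l (t0 / INR (S m))) at 1.
        apply Rmult_le_compat_r; auto. rewrite S_INR; pose proof (pos_INR m); lra. lra.
      * rewrite HP by lra. auto.
  - intros s Hs. destruct (Hss s Hs) as [_ E]. rewrite <- E, <- Hca by auto.
    destruct (Hconv a s ltac:(lra) Hs) as [_ E2]. fold t0 in E2. auto.
Qed.
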